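(* Let $X$ be a nonsingular projective toric variety of dimension $n$, let $L$ be an ample line bundle on $X$, and let $P\subset\mathbb{R}^n$ be the associated $n$-dimensional smooth lattice polytope. Then $\tau_L=\tau(P)$.
   Context: For a nonsingular projective variety $X$ with non-nef canonical divisor $K_X$ (as is the case for a projective toric variety) and an ample line bundle $L$, the nef value is $\tau_L=\min\{t\in\mathbb{R}: K_X+tL \text{ is nef}\}$. If $L=\sum_i a_iD_i$ with $D_i$ the torus-invariant divisors corresponding to the rays $\rho_i$ of the fan of $X$, the associated polytope is $P=\bigcap_i\{x:\langle\rho_i,x\rangle\ge -a_i\}$. For an integer $s\ge1$, $P^{(s)}=\bigcap_i\{x:\langle\rho_i,x\rangle\ge -a_i+s\}$. For a vertex $m$ with $\{m\}=\bigcap_{i=1}^n\{\langle\rho_i,x\rangle=-a_i\}$ (after reordering), $m(s)$ is the point with $\{m(s)\}=\bigcap_{i=1}^n\{\langle\rho_i,x\rangle=-a_i+s\}$; $P$ is $s$-spanned if $m(s)\in P^{(s)}$ for every vertex $m$. The nef value of the smooth polytope $P$ is $\tau(P)=\inf\{a/b: a,b\in\mathbb{Z}_{>0},\ aP \text{ is } b\text{-spanned}\}$. *)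

(* Defs.v *)
From mathcomp Require Import all_boot all_order all_algebra.
From mathcomp Require Import classical_sets reals.
Set Implicit Arguments. Unset Strict Implicit. Unset Printing Implicit Defensive.
Import Order.TTheory GRing.Theory Num.Theory.
Local Open Scope ring_scope.
Local Open Scope classical_set_scope.

(* Toric data: rays rho_i (i < r) in N = Z^n; maximal cones of the fan are
   given by index sets cone p (p < k); a T-invariant (R-)divisor
   sum_i d_i D_i is the coefficient vector d : 'I_r -> R. *)

Definition dotp (R : realType) (n r : nat) (rho : 'I_r -> 'I_n -> int)
  (i : 'I_r) (x : 'I_n -> R) : R := \sum_(l < n) (rho i l)%:~R * x l.

Definition in_cone (R : realType) (n r : nat) (rho : 'I_r -> 'I_n -> int)
  (S : {set 'I_r}) (x : 'I_n -> R) : Prop :=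
  exists lam : 'I_r -> R, (forall i, 0 <= lam i) /\
    forall l, x l = \sum_(i in S) lam i * (rho i l)%:~R.

Definition smooth_cone (n r : nat) (rho : 'I_r -> 'I_n -> int)
  (S : {set 'I_r}) : Prop :=
  [/\ #|S| = n,
      (forall x : 'I_n -> int, exists c : 'I_r -> int,
          forall l, x l = \sum_(i in S) c i * rho i l)
    & (forall c : 'I_r -> int,
          (forall l, \sum_(i in S) c i * rho i l = 0) ->
          forall i, i \in S -> c i = 0)].

Definition smooth_complete_fan (R : realType) (n r k : nat)
  (rho : 'I_r -> 'I_n -> int) (cone : 'I_k -> {set 'I_r}) : Prop :=
  [/\ injective rho,
      (forall p, smooth_cone rho (cone p)),
      (forall i, exists p, i \in cone p),
      (forall p q (x : 'I_n -> R), in_cone rho (cone p) x ->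
          in_cone rho (cone q) x -> in_cone rho (cone p :&: cone q) x)
    & (forall x : 'I_n -> R, exists p, in_cone rho (cone p) x)].

(* nef T-invariant R-divisor: convex support function, i.e. on each maximal
   cone the linear function m_sigma (with <m_sigma, rho_i> = -d_i on the cone)
   satisfies <m_sigma, rho_j> >= -d_j for all rays *)
Definition toric_nef (R : realType) (n r k : nat)
  (rho : 'I_r -> 'I_n -> int) (cone : 'I_k -> {set 'I_r}) (d : 'I_r -> R) : Prop :=
  forall p, exists m : 'I_n -> R,
    (forall i, i \in cone p -> dotp rho i m = - d i) /\
    (forall j, - d j <= dotp rho j m).

(* ample T-invariant divisor: strictly convex support function *)
Definition toric_ample (R : realType) (n r k : nat)
  (rho : 'I_r -> 'I_n -> int) (cone : 'I_k -> {set 'I_r}) (a : 'I_r -> int) : Prop :=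
  forall p, exists m : 'I_n -> R,
    (forall i, i \in cone p -> dotp rho i m = - (a i)%:~R) /\
    (forall j, j \notin cone p -> - (a j)%:~R < dotp rho j m).

(* coefficients of K_X + t L, with K_X = - sum_i D_i *)
Definition KplustL (R : realType) (r : nat) (a : 'I_r -> int) (t : R) : 'I_r -> R :=
  fun i => t * (a i)%:~R - 1.

Definition is_nef_value (R : realType) (n r k : nat)
  (rho : 'I_r -> 'I_n -> int) (cone : 'I_k -> {set 'I_r}) (a : 'I_r -> int)
  (tau : R) : Prop :=
  toric_nef rho cone (KplustL a tau) /\
  forall t : R, toric_nef rho cone (KplustL a t) -> tau <= t.

Definition in_poly (R : realType) (n r : nat) (rho : 'I_r -> 'I_n -> int)
  (d : 'I_r -> R) (x : 'I_n -> R) : Prop :=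
  forall i, - d i <= dotp rho i x.

Definition vertex_on (R : realType) (n r : nat) (rho : 'I_r -> 'I_n -> int)
  (d : 'I_r -> R) (m : 'I_n -> R) (I : {set 'I_r}) : Prop :=
  [/\ #|I| = n, in_poly rho d m &
      forall y : 'I_n -> R,
        (forall i, i \in I -> dotp rho i y = - d i) <-> y = m].

Definition s_spanned (R : realType) (n r : nat) (rho : 'I_r -> 'I_n -> int)
  (d : 'I_r -> R) (s : nat) : Prop :=
  forall (m : 'I_n -> R) (I : {set 'I_r}), vertex_on rho d m I ->
  forall ms : 'I_n -> R,
    (forall i, i \in I -> dotp rho i ms = - d i + s%:R) ->
    in_poly rho (fun i => d i - s%:R) ms.

Definition scaled_div (R : realType) (r : nat) (a : 'I_r -> int) (c : nat) : 'I_r -> R :=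
  fun i => (c%:R : R) * (a i)%:~R.

Definition poly_nef_value (R : realType) (n r : nat) (rho : 'I_r -> 'I_n -> int)
  (a : 'I_r -> int) : R :=
  inf [set q : R | exists u v : nat, [/\ (0 < u)%N, (0 < v)%N,
        s_spanned rho (scaled_div R a u) v & q = u%:R / v%:R]].

(* Main.v *)
Require Import Defs.
From mathcomp Require Import all_boot all_order all_algebra.
From mathcomp Require Import classical_sets reals boolp.
From mathcomp Require Import ring lra.
Set Implicit Arguments. Unset Strict Implicit. Unset Printing Implicit Defensive.
Import Order.TTheory GRing.Theory Num.Theory.
Local Open Scope ring_scope.

Section Helpers.
Variables (R : realType) (n r : nat) (rho : 'I_r -> 'I_n -> int).

Lemma dotpZ i c (x : 'I_n -> R) : dotp rho i (fun l => c * x l) = c * dotp rho i x.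
Proof. by rewrite /dotp mulr_sumr; apply: eq_bigr => l _; rewrite mulrCA. Qed.

Lemma dotpD i c1 c2 (x y : 'I_n -> R) :
  dotp rho i (fun l => c1 * x l + c2 * y l) = c1 * dotp rho i x + c2 * dotp rho i y.
Proof.
rewrite /dotp !mulr_sumr -big_split; apply: eq_bigr => l _ /=.
by ring.
Qed.

Lemma sum_cone (S : {set 'I_r}) (lam : 'I_r -> R) (x w : 'I_n -> R) :
  (forall l, x l = \sum_(i in S) lam i * (rho i l)%:~R) ->
  \sum_l x l * w l = \sum_(i in S) lam i * dotp rho i w.
Proof.
move=> Hx; rewrite /dotp.
under eq_bigr do rewrite Hx mulr_suml.
rewrite exchange_big /=; apply: eq_bigr => i _.
by rewrite mulr_sumr; apply: eq_bigr => l _; rewrite mulrA.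
Qed.

Lemma dotp_uniq (S : {set 'I_r}) (y z : 'I_n -> R) : smooth_cone rho S ->
  (forall i, i \in S -> dotp rho i y = dotp rho i z) -> y = z.
Proof.
case=> _ Hsp _ Hyz; apply: funext => l.
have [c Hc] := Hsp (fun l' => (l' == l)%:Z).
have key (w : 'I_n -> R) : w l = \sum_(i in S) (c i)%:~R * dotp rho i w.
  rewrite -(@sum_cone S (fun i => (c i)%:~R) (fun l' => ((l' == l)%:Z)%:~R)).
    rewrite (bigD1 l) //= eqxx mul1r big1 ?addr0 // => l' /negbTE ->.
    by rewrite mul0r.
  by move=> l'; rewrite Hc rmorph_sum; apply: eq_bigr => i _; rewrite rmorphM.
rewrite (key y) (key z); apply: eq_bigr => i Hi; by rewrite Hyz.
Qed.

Lemma mulmx1C_rect m n' (e : m = n') (A : 'M[R]_(m, n')) (B : 'M[R]_(n', m)) :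
  B *m A = 1%:M -> A *m B = 1%:M.
Proof. subst; exact: mulmx1C. Qed.

Lemma dotp_exists (S : {set 'I_r}) (c : 'I_r -> R) : smooth_cone rho S ->
  exists y, forall i, i \in S -> dotp rho i y = c i.
Proof.
case=> HS Hsp _.
have [cf Hcf] := choice (fun l => Hsp (fun l' => (l' == l)%:Z)).
pose B : 'M[R]_(#|S|, n) := \matrix_(j, l) (rho (enum_val j) l)%:~R.
pose C : 'M[R]_(n, #|S|) := \matrix_(l, j) (cf l (enum_val j))%:~R.
have CB : C *m B = 1%:M.
  apply/matrixP => l l'; rewrite !mxE.
  under eq_bigr do rewrite !mxE -intrM.
  rewrite -(big_enum_val (fun i => ((cf l i) * rho i l')%:~R)) /= -rmorph_sum -Hcf.
  by rewrite eq_sym; case: eqP.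
have BC : B *m C = 1%:M by apply: (mulmx1C_rect HS).
pose v : 'cV[R]_#|S| := \col_j c (enum_val j).
exists (fun l => (C *m v) l 0) => i Hi.
have E1 : (B *m (C *m v)) (enum_rank_in Hi i) 0 = v (enum_rank_in Hi i) 0
  by rewrite mulmxA BC mul1mx.
move: E1; rewrite [X in _ = X -> _]mxE enum_rankK_in // => <-.
rewrite [in RHS]mxE /dotp; apply: eq_bigr => l _.
by congr (_ * _); rewrite /B mxE; congr ((rho _ l)%:~R); rewrite enum_rankK_in.
Qed.

End Helpers.

Section Main.
Variables (R : realType) (n r k : nat) (rho : 'I_r -> 'I_n -> int)
  (cone : 'I_k -> {set 'I_r}) (a : 'I_r -> int).
Hypothesis Hn : (0 < n)%N.
Hypothesis Hfan : smooth_complete_fan R rho cone.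
Variables (A E : 'I_k -> 'I_n -> R).
Hypothesis HA1 : forall p i, i \in cone p -> dotp rho i (A p) = - (a i)%:~R.
Hypothesis HA2 : forall p j, j \notin cone p -> - (a j)%:~R < dotp rho j (A p).
Hypothesis HE : forall p i, i \in cone p -> dotp rho i (E p) = 1.

Let Hsm p : smooth_cone rho (cone p).
Proof. by case: Hfan. Qed.

Let HA3 p j : - (a j)%:~R <= dotp rho j (A p).
Proof.
case: (boolP (j \in cone p)) => H; first by rewrite HA1.
exact: ltW (HA2 H).
Qed.

Definition alpha p j := dotp rho j (A p) + (a j)%:~R.
Definition beta p j := 1 - dotp rho j (E p).

Lemma alpha_ge0 p j : 0 <= alpha p j.
Proof. have := HA3 p j; rewrite /alpha; lra. Qed.

Lemma alpha0 p j : alpha p j = 0 -> beta p j = 0.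
Proof.
rewrite /alpha /beta; case: (boolP (j \in cone p)) => H.
  by rewrite HE // subrr.
have := HA2 H; lra.
Qed.

Lemma nefP t : toric_nef rho cone (KplustL a t) <->
  forall p j, beta p j <= t * alpha p j.
Proof.
split.
  move=> H p j; have [m [Hm1 Hm2]] := H p.
  have Em : m = (fun l => t * A p l + 1 * E p l).
    apply: (dotp_uniq (Hsm p)) => i Hi.
    by rewrite Hm1 // dotpD HA1 // HE // /KplustL; ring.
  have := Hm2 j; rewrite Em dotpD /KplustL /alpha /beta; lra.
move=> H p; exists (fun l => t * A p l + 1 * E p l); split.
  by move=> i Hi; rewrite dotpD HA1 // HE // /KplustL; ring.
move=> j; have := H p j; rewrite dotpD /KplustL /alpha /beta; lra.
Qed.


Lemma vertex_cone u m I : (0 < u)%N ->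
  vertex_on rho (scaled_div R a u) m I ->
  exists p, I = cone p /\ m = (fun l => u%:R * A p l).
Proof.
move=> Hu [HI Hm Hiff].
have Heq : forall i, i \in I -> dotp rho i m = - scaled_div R a u i.
  exact: (proj2 (Hiff m) erefl).
pose x := fun l => \sum_(i in I) 1 * (rho i l)%:~R : R.
have [p [lam [Hlam Hx]]] : exists p, in_cone rho (cone p) x by case: Hfan => _ _ _ _; apply.
have Hsum y : \sum_(i in I) dotp rho i y = \sum_(i in cone p) lam i * dotp rho i y.
  rewrite -(@sum_cone _ _ _ rho (cone p) lam x) //.
  rewrite (@sum_cone _ _ _ rho I (fun _ => 1) x) //.
  by apply: eq_bigr => i _; rewrite mul1r.
pose m' := fun l => u%:R * A p l.
have Hu0 : (0 : R) < u%:R by rewrite ltr0n.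
have dm' i : dotp rho i m' = u%:R * dotp rho i (A p) by rewrite dotpZ.
have H1 : \sum_(i in I) dotp rho i m' <= \sum_(i in I) - scaled_div R a u i.
  rewrite Hsum.
  have -> : \sum_(i in cone p) lam i * dotp rho i m' =
            \sum_(i in cone p) lam i * - scaled_div R a u i.
    by apply: eq_bigr => i Hi; rewrite dm' HA1 // /scaled_div mulrN.
  apply: (@le_trans _ _ (\sum_(i in cone p) lam i * dotp rho i m)).
    by apply: ler_sum => i _; apply: ler_wpM2l; [exact: Hlam | exact: Hm].
  rewrite -Hsum le_eqVlt; apply/orP; left; apply/eqP; apply: eq_bigr => i Hi.
  by rewrite Heq.
have Hi0 : forall i, i \in I -> dotp rho i m' = - scaled_div R a u i.
  have Hpos : forall i, i \in I -> 0 <= dotp rho i m' - - scaled_div R a u i.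
    move=> i _; rewrite dm' /scaled_div subr_ge0 -mulrN.
    by rewrite ler_wpM2l ?HA3 // ltW.
  have := @psumr_eq0P _ _ (fun i => i \in I) _ Hpos.
  move=> Hz i Hi; apply/eqP; rewrite -subr_eq0; apply/eqP; apply: Hz => //.
  apply/eqP; rewrite eq_le; apply/andP; split.
    by rewrite sumrB subr_le0.
  by apply: sumr_ge0.
have Em : m' = m by apply: (proj1 (Hiff m')).
exists p; split; last by rewrite -Em.
have sub : I \subset cone p.
  apply/fintype.subsetP => i Hi; apply: contraT => Hni.
  have := HA2 Hni; have := Hi0 i Hi; rewrite dm' /scaled_div.
  move=> E1 E2; move: (E2); rewrite -(ltr_pM2l Hu0) mulrN -E1; by rewrite ltxx.
apply/eqP; rewrite eqEcard sub /=.
by case: (Hsm p) => -> _ _; rewrite HI.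
Qed.

Lemma spannedP u v : (0 < u)%N -> (0 < v)%N ->
  s_spanned rho (scaled_div R a u) v <->
  forall p j, beta p j <= (u%:R / v%:R) * alpha p j.
Proof.
move=> Hu Hv.
have Hu0 : (0 : R) < u%:R by rewrite ltr0n.
have Hv0 : (0 : R) < v%:R by rewrite ltr0n.
have key : forall p j, (beta p j <= (u%:R / v%:R) * alpha p j) <->
   (- (scaled_div R a u j - v%:R) <=
      u%:R * dotp rho j (A p) + v%:R * dotp rho j (E p)).
  move=> p j; rewrite mulrAC ler_pdivlMr // /alpha /beta /scaled_div.
  split => H; lra.
split.
  move=> Hs p j; apply/key.
  have Hv' : vertex_on rho (scaled_div R a u) (fun l => u%:R * A p l) (cone p).
    split.
    - by case: (Hsm p).
    - move=> i; rewrite dotpZ /scaled_div -mulrN ler_wpM2l ?HA3 //; exact: ltW.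
    - move=> y; split.
        move=> Hy; apply: (dotp_uniq (Hsm p)) => i Hi.
        by rewrite Hy // dotpZ HA1 // /scaled_div mulrN.
      by move=> -> i Hi; rewrite dotpZ HA1 // /scaled_div mulrN.
  have := Hs _ _ Hv' (fun l => u%:R * A p l + v%:R * E p l) _ j.
  rewrite dotpD; apply => i Hi.
  by rewrite dotpD HA1 // HE // /scaled_div; ring.
move=> H m I Hvert ms Hms j.
have [p [EI Em]] := vertex_cone Hu Hvert.
have -> : ms = (fun l => u%:R * A p l + v%:R * E p l).
  apply: (dotp_uniq (Hsm p)) => i Hi.
  by rewrite Hms ?EI // dotpD HA1 // HE // /scaled_div; ring.
rewrite dotpD; exact/key.
Qed.

Lemma not_nef0 : ~ (forall p j, beta p j <= 0 * alpha p j).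
Proof.
move=> H.
have [p0 _] : exists p, in_cone rho (cone p) (fun _ => 0 : R)
  by case: Hfan => _ _ _ _; apply.
have [j Hj] : exists j, j \in cone p0.
  case: (Hsm p0) => Hc _ _; move: Hn; rewrite -Hc => /card_gt0P [j Hj].
  by exists j.
pose x := fun l => - (rho j l)%:~R : R.
have [q [lam [Hlam Hx]]] : exists q, in_cone rho (cone q) x
  by case: Hfan => _ _ _ _; apply.
have Hs := @sum_cone _ _ _ rho (cone q) lam x (E q) Hx.
have : dotp rho j (E q) = - \sum_(i in cone q) lam i.
  have Hs' : \sum_(i in cone q) lam i * dotp rho i (E q) = \sum_(i in cone q) lam i.
    by apply: eq_bigr => i Hi; rewrite HE // mulr1.
  rewrite -Hs' -Hs /dotp -sumrN; apply: eq_bigr => l _; rewrite /x; ring.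
have : 0 <= \sum_(i in cone q) lam i by apply: sumr_ge0.
have := H q j; rewrite /beta mul0r; lra.
Qed.

Lemma nef_up t t' : t <= t' -> (forall p j, beta p j <= t * alpha p j) ->
  forall p j, beta p j <= t' * alpha p j.
Proof.
move=> Ht H p j; apply: (le_trans (H p j)).
by apply: ler_wpM2r => //; apply: alpha_ge0.
Qed.

Lemma nef_pos t : (forall p j, beta p j <= t * alpha p j) -> 0 < t.
Proof.
move=> H; rewrite ltNge; apply/negP => Ht; apply: not_nef0.
exact: nef_up Ht H.
Qed.

Lemma nef_nonempty : exists t, forall p j, beta p j <= t * alpha p j.
Proof.
pose g (pj : 'I_k * 'I_r) := `|beta pj.1 pj.2| / alpha pj.1 pj.2.
exists (\sum_pj g pj) => p j.
have [Ha|Ha] := eqVneq (alpha p j) 0.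
  by rewrite (alpha0 Ha) Ha mulr0.
have Ha0 : 0 < alpha p j by rewrite lt0r Ha alpha_ge0.
have gle : g (p, j) <= \sum_pj g pj.
  rewrite (bigD1 (p, j)) //= lerDl; apply: sumr_ge0 => pj _.
  by rewrite /g divr_ge0 // alpha_ge0.
apply: (le_trans (y := g (p, j) * alpha p j)).
  by rewrite /g /= divfK ?ler_norm.
by apply: ler_wpM2r => //; apply: ltW.
Qed.



Lemma main_inside : is_nef_value rho cone a (poly_nef_value R rho a).
Proof.
rewrite /poly_nef_value.
set S := (X in inf X).
have Slb : lbound S 0.
  by move=> q [u [v [Hu Hv _ ->]]]; rewrite divr_ge0.
have Sne : nonempty S.
  have [t0 Ht0] := nef_nonempty.
  pose u := Num.bound `|t0|.
  have Hb : `|t0| < u%:R by apply: archi_boundP.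
  have Hu : (0 < u)%N by rewrite -(ltr0n R); apply: le_lt_trans Hb.
  exists (u%:R / 1%:R); exists u, 1%N; split => //.
  apply/(spannedP Hu (isT : (0 < 1)%N)); apply: nef_up Ht0.
  by rewrite divr1; apply: le_trans (ltW Hb); apply: ler_norm.
have Sq : forall (u v : nat), (0 < u)%N -> (0 < v)%N ->
   (forall p j, beta p j <= (u%:R / v%:R) * alpha p j) -> S (u%:R / v%:R).
  move=> u v Hu Hv H; exists u, v; split => //; exact/(spannedP Hu Hv).
split.
  apply/nefP => p j.
  have [Ha|Ha] := eqVneq (alpha p j) 0.
    by rewrite (alpha0 Ha) Ha mulr0.
  have Ha0 : 0 < alpha p j by rewrite lt0r Ha alpha_ge0.
  rewrite -ler_pdivrMr //; apply: lb_le_inf => // q [u [v [Hu Hv Hs ->]]].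
  by rewrite ler_pdivrMr //; apply: (proj1 (spannedP Hu Hv) Hs).
move=> t /nefP Ht.
have Ht0 := nef_pos Ht.
rewrite leNgt; apply/negP => Hlt.
have [q] := rat_in_itvoo Hlt; rewrite in_itv /= => /andP [tq qt].
have Hq : 0 < q by rewrite -(ltr_rat R) rmorph0; apply: lt_trans tq.
pose u := `|numq q|%N.
pose v := `|denq q|%N.
have Eq : ratr q = u%:R / v%:R :> R.
  rewrite /ratr /u /v -[numq q]gtz0_abs ?numq_gt0 //.
  rewrite -[denq q]gtz0_abs ?denq_gt0 //.
have Hu : (0 < u)%N by rewrite /u absz_gt0 numq_eq0 gt_eqF.
have Hv : (0 < v)%N by rewrite /v absz_gt0 denq_neq0.
have Sr : S (ratr q).
  rewrite Eq; apply: Sq => //; rewrite -Eq; apply: nef_up Ht; exact: ltW tq.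
have Hlb : has_lbound S by exists 0.
have := ge_inf Hlb Sr; rewrite leNgt qt //.
Qed.
End Main.

Theorem proposition2p2 (R : realType) (n r k : nat)
  (rho : 'I_r -> 'I_n -> int) (cone : 'I_k -> {set 'I_r}) (a : 'I_r -> int) :
  (0 < n)%N ->
  smooth_complete_fan R rho cone ->
  toric_ample R rho cone a ->
  is_nef_value rho cone a (poly_nef_value R rho a).
Proof.
move=> Hn Hfan Hamp.
have [A HA] := choice Hamp.
have Hsm : forall p, smooth_cone rho (cone p) by case: Hfan.
have [E HE] := choice (fun p => dotp_exists (fun _ => (1 : R)) (Hsm p)).
apply: (main_inside Hn Hfan (A := A) (E := E)).
- by move=> p i Hi; case: (HA p) => H _; apply: H.
- by move=> p i Hi; case: (HA p) => _ H; apply: H.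
- by move=> p i Hi; apply: HE.
Qed.
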